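(* Let $\vartheta>0$ and $\gamma\in\mathbb R$ be fixed, let $\rho=1-\gamma/\sqrt s$, and let $F_s(\rho)=\sum_{n=0}^\infty p_s(0)\cdots p_s(n)\rho^{n+1}$ with $p_s(k)=\bigl(1+(k+1)\tfrac\vartheta s\bigr)^{-1}$, $k\in\mathbb N_0$. Then as $s\to\infty$, $F_s(\rho)\sim\Bigl(\frac2\vartheta\Bigr)^{1/2}\chi(\gamma/\sqrt{2\vartheta})\sqrt s+\frac{\gamma^3\sqrt2}{3\vartheta^{3/2}}\chi(\gamma/\sqrt{2\vartheta})-\frac{\gamma^2}{3\vartheta}-\frac23$, in the sense that the difference between the two sides tends to $0$.
   Context: $\chi$ denotes Mills' ratio, $\chi(\delta)=e^{\delta^2}\int_\delta^\infty e^{-y^2}dy$ for $\delta\in\mathbb R$. *)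

(* Defs.v *)
From Stdlib Require Import Reals.
From Coquelicot Require Import Coquelicot.
Open Scope R_scope.

Definition mills_chi (d : R) : R :=
  exp (d ^ 2) * RInt_gen (fun y => exp (- y ^ 2)) (at_point d) (Rbar_locally p_infty).

Definition p_s (theta s : R) (k : nat) : R :=
  / (1 + INR (k + 1) * theta / s).

Fixpoint prod_p (theta s : R) (n : nat) : R :=
  match n with
  | O => p_s theta s 0
  | S m => prod_p theta s m * p_s theta s (S m)
  end.

Definition F_s (theta s rho : R) : R :=
  Series (fun n => prod_p theta s n * rho ^ (n + 1)).

(* Main.v *)
Require Import Defs.
From Stdlib Require Import Reals.
From Coquelicot Require Import Coquelicot.
From Stdlib Require Import Lra Psatz Classical ZArith Lia.
Open Scope R_scope.

Definition gf (y:R) := exp (- y ^ 2).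

Lemma lim_pinf_intro (f : R -> R) (l : R) :
  (forall eps, 0 < eps -> exists M, forall x, M < x -> Rabs (f x - l) < eps) ->
  is_lim f p_infty l.
Proof.
  intros H. apply is_lim_spec. intros eps.
  destruct (H eps (cond_pos eps)) as [M HM]. exists M. exact HM.
Qed.

Lemma lim_pinf_elim (f : R -> R) (l : R) :
  is_lim f p_infty l ->
  forall eps, 0 < eps -> exists M, forall x, M < x -> Rabs (f x - l) < eps.
Proof.
  intros H eps Heps. apply is_lim_spec in H.
  destruct (H (mkposreal eps Heps)) as [M HM]. exists M. exact HM.
Qed.

Lemma lim_to_gen (f G : R -> R) (a L : R) :
  (forall b, a < b -> is_RInt f a b (G b)) -> is_lim G p_infty L ->
  is_RInt_gen f (at_point a) (Rbar_locally p_infty) L.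
Proof.
  intros HI HG P HP. unfold filtermapi.
  apply Filter_prod with (fun x => x = a) (fun b => a < b /\ P (G b)).
  - reflexivity.
  - apply filter_and. exists a; intros; lra. apply HG. exact HP.
  - intros x y -> [Hy HPy]. exists (G y). split; auto.
Qed.

Lemma comparator (a d : R) : 0 < a ->
  is_RInt_gen (fun y => exp (a^2 - 2*a*y)) (at_point d) (Rbar_locally p_infty)
    (exp (a^2 - 2*a*d) / (2*a)).
Proof.
  intros Ha.
  apply lim_to_gen with (G := fun b => exp (a^2 - 2*a*d)/(2*a) - exp (a^2-2*a*b)/(2*a)).
  - intros b Hb.
    set (F := fun y => - exp (a^2 - 2*a*y)/(2*a)).
    replace (exp (a^2 - 2*a*d)/(2*a) - exp (a^2-2*a*b)/(2*a)) with (minus (F b) (F d)).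
    2:{ unfold F, minus, plus, opp; simpl. field. lra. }
    apply (@is_RInt_derive R_CompleteNormedModule).
    + intros x _. unfold F. auto_derive; auto. replace (a * (a * 1) + - (2 * a * x)) with (a^2 - 2*a*x) by ring. field. lra.
    + intros x _. apply (@ex_derive_continuous R_AbsRing R_NormedModule). auto_derive. auto.
  - apply lim_pinf_intro. intros eps Heps.
    exists ((a^2 - ln (2*a*eps))/(2*a)). intros x Hx.
    assert (H1 : a^2 - 2*a*x < ln (2*a*eps)).
    { apply Rmult_lt_compat_l with (r := 2*a) in Hx; [|lra].
      field_simplify in Hx; lra. }
    apply exp_increasing in H1. rewrite exp_ln in H1 by nra.
    assert (H2 : 0 < exp (a^2 - 2*a*x)) by apply exp_pos.
    rewrite Rabs_left1.
    + apply Rmult_lt_reg_r with (2*a). lra. field_simplify; lra.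
    + assert (0 < exp (a ^ 2 - 2 * a * x) / (2 * a)) by (apply Rdiv_lt_0_compat; lra). lra.
Qed.
Ltac fixeq := match goal with |- @eq _ ?a ?b => change (@eq R a b) end.
Lemma Dplus (f g : R -> R) x a b : is_derive f x a -> is_derive g x b -> is_derive (fun y => f y + g y) x (a + b).
Proof. intros; apply (@is_derive_plus R_AbsRing R_NormedModule); auto. Qed.
Lemma Dmult (f g : R -> R) x a b : is_derive f x a -> is_derive g x b -> is_derive (fun y => f y * g y) x (a * g x + f x * b).
Proof. intros H1 H2. exact (@is_derive_mult R_AbsRing f g x a b H1 H2 Rmult_comm). Qed.
Lemma Dcomp (f g : R -> R) x a b : is_derive f (g x) a -> is_derive g x b -> is_derive (fun y => f (g y)) x (b * a).
Proof. intros H1 H2. exact (@is_derive_comp R_AbsRing R_NormedModule f g x a b H1 H2). Qed.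
Lemma Dconst (c x : R) : is_derive (fun _ => c) x 0.
Proof. exact (@is_derive_const R_AbsRing R_NormedModule c x). Qed.
Lemma Dext (f g : R -> R) x a b : (forall y, f y = g y) -> a = b -> is_derive f x a -> is_derive g x b.
Proof. intros H -> Hd. exact (@is_derive_ext R_AbsRing R_NormedModule f g x b H Hd). Qed.
Lemma Dcont (f : R -> R) x a : is_derive f x a -> continuous f x.
Proof. intros H. apply (@ex_derive_continuous R_AbsRing R_NormedModule). exists a; exact H. Qed.

Lemma mono_lim (H : R -> R) (M : R) :
  (forall x y, 0 <= x <= y -> H x <= H y) -> (forall x, 0 <= x -> H x <= M) ->
  exists L : R, is_lim H p_infty L.
Proof.
  intros Hm Hb.
  set (E := fun z => exists x, 0 <= x /\ z = H x).
  assert (HE1 : bound E). { exists M. intros z [x [Hx ->]]. auto. }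
  assert (HE2 : exists z, E z). { exists (H 0). exists 0. split; auto; lra. }
  destruct (completeness E HE1 HE2) as [L [HL1 HL2]].
  exists L. apply lim_pinf_intro. intros eps Heps.
  destruct (classic (exists x0, 0 <= x0 /\ L - eps < H x0)) as [[x0 [Hx0 Hx0']]|Hn].
  - exists x0. intros x Hx.
    assert (H x <= L) by (apply HL1; exists x; split; auto; lra).
    assert (H x0 <= H x) by (apply Hm; lra).
    apply Rabs_def1; lra.
  - exfalso.
    assert (L <= L - eps); [|lra].
    apply HL2. intros z [x [Hx ->]].
    destruct (Rle_dec (H x) (L - eps)) as [h|h]; auto.
    exfalso; apply Hn. exists x. split; auto; lra.
Qed.

Lemma gf_cont x : continuous gf x.
Proof. unfold gf. apply (@ex_derive_continuous R_AbsRing R_NormedModule). auto_derive. auto. Qed.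

Lemma gf_exRInt a b : ex_RInt gf a b.
Proof. apply (@ex_RInt_continuous R_CompleteNormedModule). intros; apply gf_cont. Qed.

Lemma gf_pos x : 0 < gf x.
Proof. unfold gf; apply exp_pos. Qed.

Lemma gf_le (a x : R) : gf x <= exp (a^2 - 2*a*x).
Proof. unfold gf. assert (h0 := pow2_ge_0 (x-a)). assert (h: -x^2 <= a^2-2*a*x) by (simpl in *; nra).
  destruct h as [h|h]; [left; apply exp_increasing; auto | rewrite h; lra]. Qed.

Lemma gf_gen0 : exists L, is_RInt_gen gf (at_point 0) (Rbar_locally p_infty) L.
Proof.
  destruct (mono_lim (fun b => RInt gf 0 b) (exp 1 / 2)) as [L HL].
  - intros x y Hxy.
    rewrite <- (RInt_Chasles gf 0 x y) by apply gf_exRInt.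
    assert (0 <= RInt gf x y).
    { apply RInt_ge_0. lra. apply gf_exRInt. intros; left; apply gf_pos. }
    unfold plus; simpl. lra.
  - intros x Hx.
    apply Rle_trans with (RInt (fun y => exp (1^2 - 2*1*y)) 0 x).
    + apply RInt_le; auto. apply gf_exRInt.
      apply (@ex_RInt_continuous R_CompleteNormedModule). intros; apply (@ex_derive_continuous R_AbsRing R_NormedModule). auto_derive; auto.
      intros; apply gf_le.
    + destruct (Req_dec x 0) as [->|hx].
      * rewrite RInt_point. assert (0 < exp 1) by apply exp_pos. unfold zero; simpl. lra.
      * assert (h := comparator 1 0 Rlt_0_1).
        set (F := fun y => - exp (1^2 - 2*1*y)/(2*1)).
        assert (HI : is_RInt (fun y => exp (1^2 - 2*1*y)) 0 x (minus (F x) (F 0))).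
        { apply (@is_RInt_derive R_CompleteNormedModule).
          + intros y _. unfold F. auto_derive; auto. replace (1 * (1 * 1) + - (2 * 1 * y)) with (1^2 - 2*1*y) by ring. field.
          + intros y _. apply (@ex_derive_continuous R_AbsRing R_NormedModule). auto_derive. auto. }
        rewrite (is_RInt_unique _ _ _ _ HI). unfold minus, plus, opp, F; simpl.
        replace (1 * (1 * 1) - 2 * 1 * 0) with 1 by ring.
        assert (0 < exp (1 * (1 * 1) - 2 * 1 * x)) by apply exp_pos. lra.
  - exists L. apply lim_to_gen with (G := fun b => RInt gf 0 b); auto.
    intros b _. apply (@RInt_correct R_CompleteNormedModule). apply gf_exRInt.
Qed.

Definition I0 := RInt_gen gf (at_point 0) (Rbar_locally p_infty).

Lemma I_gen d : is_RInt_gen gf (at_point d) (Rbar_locally p_infty) (RInt gf d 0 + I0).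
Proof.
  destruct gf_gen0 as [L HL].
  assert (HI0 : I0 = L) by (apply is_RInt_gen_unique; auto).
  rewrite HI0.
  apply (is_RInt_gen_Chasles gf 0 (RInt gf d 0) L); auto.
  apply is_RInt_gen_at_point. apply (@RInt_correct R_CompleteNormedModule). apply gf_exRInt.
Qed.

Lemma mills_eq d : mills_chi d = exp (d^2) * (RInt gf d 0 + I0).
Proof.
  unfold mills_chi. f_equal. apply is_RInt_gen_unique. apply (I_gen d).
Qed.

Lemma mills_derive d : is_derive mills_chi d (2*d*mills_chi d - 1).
Proof.
  apply is_derive_ext with (f := fun d => exp (d^2) * (RInt gf d 0 + I0)).
  { intros; symmetry; apply mills_eq. }
  rewrite mills_eq.
  assert (HD : is_derive (fun a => RInt gf a 0) d (opp (gf d))).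
  { apply (is_derive_RInt' gf (fun a => RInt gf a 0) d 0).
    - apply filter_forall. intros. apply (@RInt_correct R_CompleteNormedModule). apply gf_exRInt.
    - apply gf_cont. }
  assert (HE : is_derive (fun a => exp (a^2)) d (2*d*exp (d^2))).
  { auto_derive; auto. replace (d*(d*1)) with (d^2) by ring. ring. }
  assert (HP : is_derive (fun a => RInt gf a 0 + I0) d (opp (gf d))).
  { eapply Dext. 3:{ apply Dplus. exact HD. apply (Dconst I0). } reflexivity. unfold opp; simpl; ring. }
  assert (HM := Dmult _ _ _ _ _ HE HP).
  unfold opp in HM; simpl in HM.
  replace (2 * d * (exp (d ^ 2) * (RInt gf d 0 + I0)) - 1) with
    (2 * d * exp (d ^ 2) * (RInt gf d 0 + I0) + exp (d ^ 2) * - gf d); auto.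
  unfold gf. replace (exp (d^2) * - exp (- d^2)) with (- (exp (d^2) * exp (- d^2))) by ring.
  rewrite <- exp_plus. replace (d^2 + - d^2) with 0 by ring. rewrite exp_0. ring.
Qed.

Lemma mills_bound (a d : R) : 0 < a -> Rabs (mills_chi d) <= exp ((d - a)^2) / (2*a).
Proof.
  intros Ha.
  assert (Hn : norm (RInt gf d 0 + I0) <= exp (a^2 - 2*a*d) / (2*a)).
  { eapply (RInt_gen_norm (V:=R_CompleteNormedModule) (Fa := at_point d) (Fb := Rbar_locally p_infty) gf (fun y => exp (a^2 - 2*a*y))); [ | | exact (I_gen d) | exact (comparator a d Ha)].
    - apply Filter_prod with (fun x => x = d) (fun y => d < y). reflexivity.
      exists d; auto. intros x y -> H; simpl; lra.
    - apply Filter_prod with (fun x => True) (fun y => True). reflexivity.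
      exists 0; auto. intros x y _ _ z _. unfold norm; simpl. unfold abs; simpl.
      rewrite Rabs_pos_eq by (left; apply gf_pos). apply gf_le. }
  unfold norm in Hn; simpl in Hn; unfold abs in Hn; simpl in Hn.
  rewrite mills_eq, Rabs_mult, Rabs_pos_eq by (left; apply exp_pos).
  apply Rle_trans with (exp (d^2) * (exp (a ^ 2 - 2 * a * d) / (2 * a))).
  - apply Rmult_le_compat_l; auto. left; apply exp_pos.
  - replace (exp (d ^ 2) * (exp (a ^ 2 - 2 * a * d) / (2 * a))) with
      ((exp (d ^ 2) * exp (a ^ 2 - 2 * a * d)) / (2 * a)) by (field; lra).
    rewrite <- exp_plus. replace (d ^ 2 + (a ^ 2 - 2 * a * d)) with ((d-a)^2) by ring. lra.
Qed.

Definition U0 (th g : R) := sqrt (2/th) * mills_chi (g / sqrt (2*th)).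

Lemma sq_facts th : 0 < th ->
  sqrt (2*th) ^ 2 = 2*th /\ sqrt (2/th) * sqrt (2*th) = 2 /\ 0 < sqrt (2*th) /\ 0 < sqrt (2/th).
Proof.
  intros h. split; [|split; [|split]].
  - simpl. rewrite Rmult_1_r. apply sqrt_sqrt. lra.
  - rewrite <- sqrt_mult_alt by (apply Rlt_le, Rdiv_lt_0_compat; lra).
    replace (2 / th * (2 * th)) with (2*2) by (field; lra). apply sqrt_square; lra.
  - apply sqrt_lt_R0; lra.
  - apply sqrt_lt_R0. apply Rdiv_lt_0_compat; lra.
Qed.

Lemma U0_derive th g : 0 < th -> is_derive (U0 th) g ((g * U0 th g - 1)/th).
Proof.
  intros h. destruct (sq_facts th h) as [k2 [ak [kp ap]]].
  set (k := sqrt (2*th)) in *. set (al := sqrt (2/th)) in *.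
  assert (H1 : is_derive (fun g => g / k) g (/k)).
  { auto_derive; auto. field. lra. }
  assert (H2 := Dcomp mills_chi (fun g => g / k) g _ _ (mills_derive (g/k)) H1).
  assert (H3 := Dmult (fun _ => al) (fun g => mills_chi (g/k)) g _ _ (Dconst al g) H2).
  unfold U0. fold k al.
  eapply Dext. 3: exact H3. reflexivity.
  assert (al = 2 / k) by (apply (Rmult_eq_reg_r k); [|lra]; field_simplify; lra).
  rewrite H. field_simplify; try lra. replace (k^3) with (k * k^2) by ring. rewrite k2. cut (forall m gg : R, (4*m*gg - 2*k)/(k*(2*th)) = (2*m*gg - k)/(k*th)). intros Hc; apply Hc. intros; field; lra.
Qed.

Definition Bnd (th ga : R) := sqrt (2/th) * (exp ((ga / sqrt (2*th) - 1)^2) / 2).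

Lemma U0_bound th ga g : 0 < th -> ga <= g -> Rabs (U0 th g) <= Bnd th ga.
Proof.
  intros h hg. destruct (sq_facts th h) as [k2 [ak [kp ap]]].
  unfold U0, Bnd. set (k := sqrt (2*th)) in *. set (al := sqrt (2/th)) in *.
  rewrite Rabs_mult, (Rabs_pos_eq al) by lra.
  apply Rmult_le_compat_l; [lra|].
  assert (hd : ga / k <= g / k) by (apply Rmult_le_compat_r; [left; apply Rinv_0_lt_compat|]; lra).
  assert (e1 : 1 <= exp ((ga / k - 1) ^ 2)).
  { apply Rle_trans with (exp 0); [rewrite exp_0; lra|].
    destruct (pow2_ge_0 (ga/k - 1)) as [q|q].
    left; apply exp_increasing; auto. rewrite <- q; lra. }
  destruct (Rle_dec (g/k) 1) as [hl|hl].
  - eapply Rle_trans. apply (mills_bound 1 (g/k) Rlt_0_1).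
    replace (2*1) with 2 by ring. apply Rmult_le_compat_r; [lra|].
    assert (hq : (g / k - 1) ^ 2 <= (ga / k - 1) ^ 2) by (simpl; nra).
    destruct (Rle_lt_or_eq_dec _ _ hq) as [q|q].
    + left; apply exp_increasing; auto.
    + rewrite q; lra.
  - eapply Rle_trans. apply (mills_bound (g/k) (g/k)). lra.
    replace (g/k - g/k) with 0 by ring. replace (0^2) with 0 by ring. rewrite exp_0.
    apply Rle_trans with (/2). unfold Rdiv; rewrite Rmult_1_l; apply Rinv_le_contravar; lra.
    lra.
Qed.

Lemma ps_pos th s k : 0 < th -> 0 < s -> 0 < p_s th s k /\ p_s th s k <= 1.
Proof.
  intros h hs. unfold p_s.
  assert (0 <= INR (k+1) * th / s) by (apply Rmult_le_pos; [apply Rmult_le_pos; [apply pos_INR|lra]| left; apply Rinv_0_lt_compat; lra]).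
  split. apply Rinv_0_lt_compat; lra.
  rewrite <- Rinv_1. apply Rinv_le_contravar; lra.
Qed.

Lemma b_pos th s n : 0 < th -> 0 < s -> 0 < prod_p th s n /\ prod_p th s n <= 1.
Proof.
  intros h hs. induction n as [|n IH]; simpl.
  - apply ps_pos; auto.
  - destruct (ps_pos th s (S n) h hs). destruct IH. split. nra.
    nra.
Qed.

Lemma CV_b th s : 0 < th -> 0 < s -> CV_radius (prod_p th s) = p_infty.
Proof.
  intros h hs. apply CV_radius_infinite_DAlembert.
  - intros n. destruct (b_pos th s n h hs); lra.
  - apply is_lim_seq_spec. intros eps.
    destruct (archimed (s / (th * eps))) as [N _].
    assert (exists M : nat, s / (th * eps) < INR M) as [M HM].
    { exists (Z.to_nat (up (s/(th*eps)))). rewrite INR_IZR_INZ.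
      destruct (Z_le_gt_dec 0 (up (s / (th * eps)))) as [z|z].
      rewrite Z2Nat.id; auto.
      exfalso. assert (0 < s/(th*eps)). { apply Rdiv_lt_0_compat. lra. apply Rmult_lt_0_compat. lra. apply cond_pos. }
      assert (hz : IZR 0 < IZR (up (s / (th * eps)))) by (simpl; lra). apply lt_IZR in hz. lia. }
    exists M. intros n Hn. simpl.
    destruct (b_pos th s n h hs) as [p1 p2].
    replace (prod_p th s n * p_s th s (S n) / prod_p th s n) with (p_s th s (S n)) by (field; lra).
    destruct (ps_pos th s (S n) h hs) as [q1 q2]. rewrite Rminus_0_r, Rabs_Rabsolu.
    rewrite Rabs_pos_eq by lra. unfold p_s.
    assert (hn : INR M <= INR (S n + 1)) by (apply le_INR; lia).
    assert (he : 0 < eps) by apply cond_pos.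
    assert (s / (th*eps) < INR (S n + 1)) by lra.
    assert (s < INR (S n + 1) * th * eps).
    { apply Rmult_lt_compat_r with (r := th*eps) in H; [|nra]. field_simplify in H; lra. }
    apply Rmult_lt_reg_l with (1 + INR (S n + 1) * th / s).
    { assert (0 <= INR (S n + 1) * th / s) by (apply Rmult_le_pos; [apply Rmult_le_pos; [apply pos_INR|lra]| left; apply Rinv_0_lt_compat; lra]). lra. }
    rewrite Rinv_r.
    2:{ assert (0 <= INR (S n + 1) * th / s) by (apply Rmult_le_pos; [apply Rmult_le_pos; [apply pos_INR|lra]| left; apply Rinv_0_lt_compat; lra]). lra. }
    assert (1 < INR (S n + 1) * th / s * eps).
    { apply Rmult_lt_reg_r with s; auto. field_simplify; lra. }
    assert (0 < eps) by auto. nra.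
Qed.

Definition PP th s x := PSeries (prod_p th s) x.

Lemma ex_ps (x : R) (a : nat -> R) : CV_radius a = p_infty -> ex_series (fun n => a n * x ^ n).
Proof.
  intros H. apply ex_series_Rabs. apply CV_disk_inside. rewrite H. simpl; auto.
Qed.

Lemma PP_identity th s x : 0 < th -> 0 < s ->
  PP th s x + th / s * (PP th s x + x * PSeries (PS_derive (prod_p th s)) x) = 1 + x * PP th s x.
Proof.
  intros h hs. set (b := prod_p th s).
  assert (Cb : CV_radius b = p_infty) by (apply CV_b; auto).
  assert (Cd : CV_radius (PS_derive b) = p_infty) by (rewrite CV_radius_derive; auto).
  assert (EA := ex_ps x b Cb).
  assert (ED := ex_ps x _ Cd).
  unfold PP, PSeries. fold b.
  assert (HxD : x * Series (fun k => PS_derive b k * x ^ k) = Series (fun n => INR n * (b n * x ^ n))).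
  { rewrite <- Series_scal_l. rewrite (Series_incr_1_aux (fun n => INR n * (b n * x ^ n))).
    2:{ simpl; ring. }
    apply Series_ext. intros n. unfold PS_derive. simpl. ring. }
  assert (EN : ex_series (fun n => INR n * (b n * x ^ n))).
  { apply ex_series_incr_1. eapply ex_series_ext.
    2: apply (@ex_series_scal_l R_AbsRing R_NormedModule x _ ED).
    intros n. unfold PS_derive, scal; simpl. unfold mult; simpl. ring. }
  rewrite HxD.
  set (C := fun n => b n * x ^ n + th / s * (b n * x ^ n + INR n * (b n * x ^ n))).
  assert (EC : ex_series C).
  { unfold C. apply (@ex_series_plus R_AbsRing R_NormedModule). exact EA.
    apply (@ex_series_scal_l R_AbsRing R_NormedModule (th/s)). apply (@ex_series_plus R_AbsRing R_NormedModule); auto. }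
  assert (HL : Series (fun n => b n * x ^ n) + th / s * (Series (fun n => b n * x ^ n) + Series (fun n => INR n * (b n * x ^ n))) = Series C).
  { unfold C. rewrite Series_plus; auto. rewrite Series_scal_l. rewrite Series_plus; auto.
    apply (@ex_series_scal_l R_AbsRing R_NormedModule (th/s)). apply (@ex_series_plus R_AbsRing R_NormedModule); auto. }
  rewrite HL, (Series_incr_1 C EC).
  assert (HC0 : C 0%nat = 1).
  { unfold C, b. simpl. unfold p_s. simpl. field.
    assert (0 <= 1 * th / s) by (apply Rmult_le_pos; [lra|left; apply Rinv_0_lt_compat; lra]). split; lra. }
  rewrite HC0. f_equal.
  rewrite <- Series_scal_l. apply Series_ext. intros n.
  unfold C, b. simpl prod_p. unfold p_s.
  rewrite S_INR. replace (S n + 1)%nat with (S (S n)) by lia.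
  rewrite !S_INR. simpl pow.
  assert (0 <= INR n) by apply pos_INR.
  assert (0 <= (INR n + 1 + 1) * th / s) by (apply Rmult_le_pos; [apply Rmult_le_pos; lra| left; apply Rinv_0_lt_compat; lra]).
  assert (0 <= (INR n + 1 + 1) * th) by nra. field. split; lra.
Qed.

Definition uf th s g := (1 - g / sqrt s) * PP th s (1 - g / sqrt s) / sqrt s.

Lemma PP_derive th s x : 0 < th -> 0 < s ->
  is_derive (PP th s) x (PSeries (PS_derive (prod_p th s)) x).
Proof.
  intros h hs. apply is_derive_PSeries. rewrite CV_b; simpl; auto.
Qed.

Lemma alg_u th s t g P D : 0 < th -> 0 < t -> t * t = s ->
  P + th/s*(P + (1-g/t)*D) = 1 + (1-g/t)*P ->
  (-/t*P + (1-g/t)*(-/t*D))*/t + (1-g/t)*P*0 = (g/t*P - 1)/th.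
Proof.
  intros h tp tt Hid. set (rho := 1 - g/t) in *.
  assert (hs : 0 < s) by nra.
  assert (E : P + rho * D = s / th * (1 + rho * P - P)).
  { apply (Rmult_eq_reg_l (th / s)). 2:{ apply Rgt_not_eq, Rdiv_lt_0_compat; lra. }
    replace (th / s * (s / th * (1 + rho * P - P))) with (1 + rho * P - P) by (field; lra).
    lra. }
  replace ((- / t * P + rho * (- / t * D)) * / t + rho * P * 0) with (- (P + rho * D) / (t * t)) by (field; lra).
  rewrite tt, E. unfold rho. field. split; lra.
Qed.

Lemma uf_derive th s (g : R) : 0 < th -> 0 < s ->
  is_derive (uf th s) g ((g / sqrt s * PP th s (1 - g / sqrt s) - 1) / th).
Proof.
  intros h hs.
  assert (tp : 0 < sqrt s) by (apply sqrt_lt_R0; auto).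
  assert (tt : sqrt s * sqrt s = s) by (apply sqrt_sqrt; lra).
  set (t := sqrt s) in *.
  assert (Hr : is_derive (fun g => 1 - g / t) g (- / t)).
  { auto_derive; auto. field. lra. }
  assert (H1 := Dcomp (PP th s) (fun g => 1 - g/t) g _ _ (PP_derive th s (1 - g/t) h hs) Hr).
  assert (H2 := Dmult (fun g => 1 - g/t) (fun g => PP th s (1-g/t)) g _ _ Hr H1).
  assert (H3 := Dmult (fun g => (1-g/t) * PP th s (1-g/t)) (fun _ => /t) g _ _ H2 (Dconst (/t) g)).
  eapply Dext. 3: exact H3.
  { intros y. unfold uf. fold t. unfold Rdiv at 3. reflexivity. }
  cbv beta.
  assert (Hid := PP_identity th s (1 - g/t) h hs).
  set (P := PP th s (1 - g / t)) in *.
  set (D := PSeries (PS_derive (prod_p th s)) (1 - g / t)) in *.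
  set (rho := 1 - g/t) in *.
  exact (alg_u th s t g P D h tp tt Hid).
Qed.

Lemma cont_of_der (f : R -> R) x a : is_derive f x a -> continuity_pt f x.
Proof. intros H. apply continuity_pt_filterlim. apply (Dcont f x a H). Qed.

Lemma mvt_le (f df : R -> R) a b : a <= b ->
  (forall x, a <= x <= b -> is_derive f x (df x)) ->
  (forall x, a <= x <= b -> 0 <= df x) -> f a <= f b.
Proof.
  intros hab Hd Hp.
  destruct (MVT_gen f a b df) as [c [hc e]]; cbv zeta in *.
  - intros x hx. rewrite Rmin_left, Rmax_right in hx by lra. apply Hd; lra.
  - intros x hx. rewrite Rmin_left, Rmax_right in hx by lra. apply (cont_of_der f x (df x)). apply Hd; lra.
  - rewrite Rmin_left, Rmax_right in hc by lra.
    assert (0 <= df c * (b - a)) by (apply Rmult_le_pos; [apply Hp; lra| lra]). lra.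
Qed.

Lemma mvt_cmp (h dh Q dQ : R -> R) a b : a <= b ->
  (forall x, a <= x <= b -> is_derive h x (dh x)) ->
  (forall x, a <= x <= b -> is_derive Q x (dQ x)) ->
  (forall x, a <= x <= b -> Rabs (dh x) <= dQ x) ->
  Rabs (h b - h a) <= Q b - Q a.
Proof.
  intros hab Hh HQ Hb.
  assert (A1 := mvt_le (fun x => Q x - h x) (fun x => dQ x - dh x) a b hab).
  assert (A2 := mvt_le (fun x => Q x + h x) (fun x => dQ x + dh x) a b hab).
  cbv beta in A1, A2.
  assert (Q a - h a <= Q b - h b).
  { apply A1. intros x hx. apply (Dext (fun x => Q x + (-1) * h x) _ x (dQ x + (0 * h x + (-1) * dh x))). intros; fixeq; ring. fixeq; ring.
    apply Dplus. apply HQ; auto. apply Dmult. apply Dconst. apply Hh; auto.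
    intros x hx. specialize (Hb x hx). apply Rabs_le_between in Hb. lra. }
  assert (Q a + h a <= Q b + h b).
  { apply A2. intros x hx. apply Dplus. apply HQ; auto. apply Hh; auto.
    intros x hx. specialize (Hb x hx). apply Rabs_le_between in Hb. lra. }
  apply Rabs_le. lra.
Qed.

Lemma exp_n (n : nat) y : exp (INR n * y) = exp y ^ n.
Proof.
  induction n as [|n IH]. simpl. rewrite Rmult_0_l, exp_0. reflexivity.
  rewrite S_INR, Rmult_plus_distr_r, Rmult_1_l, exp_plus, IH. simpl. ring.
Qed.

Lemma gauss_poly (k : R) (N : nat) : 0 < k -> exists C, 0 < C /\
  forall x, (1 + x^2)^N * exp (- (k * x^2)) <= C / (1 + x^2).
Proof.
  intros hk. set (m := INR (N+1)).
  assert (hm : 0 < m) by (unfold m; apply lt_0_INR; lia).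
  exists (exp k * (m / k) ^ (N+1)). split.
  { apply Rmult_lt_0_compat. apply exp_pos. apply pow_lt. apply Rdiv_lt_0_compat; lra. }
  intros x. set (q := 1 + x^2).
  assert (hq : 0 < q) by (unfold q; assert (0 <= x^2) by apply pow2_ge_0; lra).
  set (y := k * q / m).
  assert (hy : 0 < y) by (unfold y; apply Rdiv_lt_0_compat; [apply Rmult_lt_0_compat|]; lra).
  assert (E1 : exp (- (k * x^2)) = exp k * / exp (m * y)).
  { unfold y. replace (m * (k * q / m)) with (k * q) by (field; lra).
    rewrite <- exp_Ropp, <- exp_plus. f_equal. unfold q. ring. }
  assert (E2 : y ^ (N+1) <= exp (m * y)).
  { unfold m. rewrite exp_n. apply pow_incr. split. lra.
    assert (h1 := exp_ineq1_le y). lra. }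
  assert (E3 : y ^ (N+1) = (k/m)^(N+1) * q^N * q).
  { unfold y. replace (k * q / m) with (k / m * q) by (field; lra).
    rewrite Rpow_mult_distr, (pow_add q). simpl. ring. }
  rewrite E1.
  assert (hkm : 0 < (k/m)^(N+1)) by (apply pow_lt; apply Rdiv_lt_0_compat; lra).
  assert (hqN : 0 < q^N) by (apply pow_lt; lra).
  assert (hE : 0 < exp (m*y)) by apply exp_pos.
  assert (hek : 0 < exp k) by apply exp_pos.
  apply Rle_trans with (q^N * (exp k * / ((k/m)^(N+1) * q^N * q))).
  - apply Rmult_le_compat_l; [lra|]. apply Rmult_le_compat_l; [lra|].
    rewrite <- E3. apply Rinv_le_contravar; auto. rewrite E3. apply Rmult_lt_0_compat; [apply Rmult_lt_0_compat|]; lra.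
  - right. replace ((m/k)^(N+1)) with (/ (k/m)^(N+1)).
    field. repeat split; lra.
    rewrite <- pow_inv. f_equal. field. lra.
Qed.

Lemma Fs_eq th s rho : F_s th s rho = rho * PP th s rho.
Proof.
  unfold F_s, PP, PSeries. rewrite <- Series_scal_l. apply Series_ext. intros n.
  rewrite Nat.add_1_r. simpl. ring.
Qed.

Lemma PP_half th s : 0 < th -> 0 < s -> 0 <= PP th s (1/2) <= 2.
Proof.
  intros h hs.
  assert (Hg := is_series_geom (1/2)).
  assert (Hg' : is_series (fun n => (1/2)^n) 2).
  { assert (H1 : Rabs (1/2) < 1) by (rewrite Rabs_pos_eq; lra).
    pose proof (Hg H1) as H2. replace (/ (1 - 1/2)) with 2 in H2 by field. exact H2. }
  split.
  - assert (Z : Series (fun _ : nat => 0) = 0).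
    { rewrite (Series_ext _ (fun n => 0 * 1)) by (intros; ring). rewrite Series_scal_l. ring. }
    unfold PP, PSeries. rewrite <- Z.
    apply Series_le.
    + intros n. split. lra. destruct (b_pos th s n h hs). apply Rmult_le_pos. lra. apply pow_le. lra.
    + apply ex_ps. apply CV_b; auto.
  - unfold PP, PSeries. apply Rle_trans with (Series (fun n => (1/2)^n)); [|right; apply (is_series_unique _ _ Hg')].
    apply Series_le.
    + intros n. destruct (b_pos th s n h hs). assert (0 <= (1/2)^n) by (apply pow_le; lra).
      split; [apply Rmult_le_pos; lra | rewrite <- (Rmult_1_l ((1/2)^n)) at 2; apply Rmult_le_compat_r; lra].
    + exists 2; auto.
Qed.

Definition cf th g := g^3 * U0 th g / (3*th) - g^2/(3*th) - 2/3.
Definition Vf th s g := U0 th g + cf th g / sqrt s.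
Definition wf th s g := uf th s g - Vf th s g.
Definition Phi th s g := (sqrt s * g + s * ln (1 - g / sqrt s)) / th.
Definition hf th s g := wf th s g * exp (Phi th s g).
Definition rr th s g := (g^3 * U0 th g + g^2 * cf th g) / (th * s * (1 - g / sqrt s)).

Lemma V_derive th s (g : R) : 0 < th -> 0 < s ->
  is_derive (Vf th s) g ((g * U0 th g - 1)/th +
     (g^2/th * U0 th g + g^3/(3*th) * ((g * U0 th g - 1)/th) - 2*g/(3*th)) / sqrt s).
Proof.
  intros h hs.
  assert (HU := U0_derive th g h).
  assert (H1 : is_derive (fun g => g^3/(3*th)) g (g^2/th)) by (auto_derive; auto; fixeq; field; lra).
  assert (H2 : is_derive (fun g => - g^2/(3*th) - 2/3) g (-2*g/(3*th))) by (auto_derive; auto; fixeq; field; lra).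
  assert (Hc := Dplus _ _ _ _ _ (Dmult _ _ _ _ _ H1 HU) H2).
  assert (HV := Dplus _ _ _ _ _ HU (Dmult _ _ _ _ _ (Dconst (/ sqrt s) g) Hc)).
  eapply Dext. 3: exact HV.
  - intros y. cbv beta. unfold Vf, cf. fixeq. field. split. lra. apply Rgt_not_eq, sqrt_lt_R0; lra.
  - cbv beta. fixeq. field. split. lra. apply Rgt_not_eq, sqrt_lt_R0; lra.
Qed.

Lemma Phi_derive th s (g : R) : 0 < th -> 0 < s -> g < sqrt s ->
  is_derive (Phi th s) g (- g / (th * (1 - g / sqrt s))).
Proof.
  intros h hs hg. assert (tp : 0 < sqrt s) by (apply sqrt_lt_R0; auto).
  assert (tt : sqrt s * sqrt s = s) by (apply sqrt_sqrt; lra).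
  assert (hr : 0 < 1 - g / sqrt s).
  { apply Rlt_Rminus. apply (Rmult_lt_reg_r (sqrt s)); auto. field_simplify; lra. }
  unfold Phi. auto_derive. unfold Rdiv in hr; lra.
  set (t := sqrt s) in *. rewrite <- tt. field. unfold Rdiv in hr. repeat split; lra.
  Show.
Qed.

Lemma h_derive th s (g : R) : 0 < th -> 0 < s -> g < sqrt s ->
  is_derive (hf th s) g (rr th s g * exp (Phi th s g)).
Proof.
  intros h hs hg. assert (tp : 0 < sqrt s) by (apply sqrt_lt_R0; auto).
  assert (tt : sqrt s * sqrt s = s) by (apply sqrt_sqrt; lra).
  assert (hr : 0 < 1 - g / sqrt s).
  { apply Rlt_0_minus. apply (Rmult_lt_reg_r (sqrt s)); auto. field_simplify; lra. }
  assert (Hu := uf_derive th s g h hs).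
  assert (HV := V_derive th s g h hs).
  assert (Hw := Dplus _ _ _ _ _ Hu (Dmult _ _ _ _ _ (Dconst (-1) g) HV)).
  assert (HE := Dcomp exp (Phi th s) g _ _ (is_derive_exp (Phi th s g)) (Phi_derive th s g h hs hg)).
  assert (Hh := Dmult _ _ _ _ _ Hw HE).
  eapply Dext. 3: exact Hh.
  - intros y. cbv beta. unfold hf, wf. fixeq. ring.
  - cbv beta. unfold rr, uf, Vf, cf. fixeq.
    set (t := sqrt s) in *. set (P := PP th s (1 - g / t)). set (U := U0 th g). set (E := exp (Phi th s g)).
    rewrite <- tt. field. unfold Rdiv in hr. repeat split; lra.
Qed.

Definition Kc th ga := Bnd th ga + Bnd th ga / (3*th) + 1/(3*th) + 2/3.

Lemma Bnd_pos th ga : 0 < th -> 0 < Bnd th ga.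
Proof. intros h. unfold Bnd. apply Rmult_lt_0_compat. apply sqrt_lt_R0, Rdiv_lt_0_compat; lra.
  apply Rdiv_lt_0_compat; [apply exp_pos|lra]. Qed.

Lemma poly_facts (a : R) : 0 <= a ->
  a^2 <= (1+a^2)^3 /\ a^3 <= (1+a^2)^3 /\ a^4 <= (1+a^2)^3 /\ a^5 <= (1+a^2)^3.
Proof.
  intros ha. set (y := 1 + a^2).
  assert (h1 : a <= y) by (unfold y; nra).
  assert (h2 : a^2 <= y) by (unfold y; lra).
  assert (hy : 1 <= y) by (unfold y; nra).
  assert (a2 : 0 <= a^2) by nra.
  assert (y2 : y <= y^2) by nra. assert (y3 : y^2 <= y^3) by nra.
  assert (a3 : a^3 <= y^2) by (replace (a^3) with (a * a^2) by ring; replace (y^2) with (y*y) by ring; apply Rmult_le_compat; lra).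
  assert (a4 : a^4 <= y^2) by (replace (a^4) with (a^2 * a^2) by ring; replace (y^2) with (y*y) by ring; apply Rmult_le_compat; lra).
  assert (a5 : a^5 <= y^3) by (replace (a^5) with (a * a^4) by ring; replace (y^3) with (y*y^2) by ring; apply Rmult_le_compat; try lra; nra).
  repeat split; lra.
Qed.

Lemma rr_bound th ga s g : 0 < th -> 0 < s -> ga <= g -> g <= sqrt s / 2 ->
  Rabs (rr th s g) <= 2 * Kc th ga * (1 + g^2)^3 / (th * s).
Proof.
  intros h hs hg1 hg2. assert (tp : 0 < sqrt s) by (apply sqrt_lt_R0; auto).
  assert (hr : 1/2 <= 1 - g / sqrt s).
  { assert (g / sqrt s <= 1/2); [|lra]. apply (Rmult_le_reg_r (sqrt s)); auto. field_simplify; lra. }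
  assert (HU := U0_bound th ga g h hg1).
  assert (hB := Bnd_pos th ga h).
  set (B := Bnd th ga) in *. set (U := U0 th g) in *. set (a := Rabs g).
  assert (ha : 0 <= a) by apply Rabs_pos.
  destruct (poly_facts a ha) as [p2 [p3 [p4 p5]]].
  assert (g2 : g^2 = a^2) by (unfold a; rewrite pow2_abs; auto).
  assert (g3 : Rabs (g^3) = a^3) by (unfold a; rewrite RPow_abs; auto).
  assert (g4 : g^4 = a^4) by (replace (g^4) with ((g^2)^2) by ring; rewrite g2; ring).
  set (X := g^3 * U).
  assert (hX : Rabs X <= a^3 * B) by (unfold X; rewrite Rabs_mult, g3; apply Rmult_le_compat_l; [apply pow_le|]; lra).
  apply Rabs_le_between in hX.
  set (c1 := 1 + a^2/(3*th)).
  assert (hc1 : 1 <= c1) by (unfold c1; assert (0 <= a^2/(3*th)) by (apply Rdiv_le_0_compat; [apply pow2_ge_0|lra]); lra).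
  set (d := a^4/(3*th) + 2*a^2/3).
  assert (hd : 0 <= d) by (unfold d; assert (0 <= a^4/(3*th)) by (apply Rdiv_le_0_compat; [apply pow_le|]; lra);
     assert (0 <= a^2) by apply pow2_ge_0; lra).
  assert (en : g^3 * U + g^2 * cf th g = X * c1 - d).
  { unfold cf, X, c1, d. fold U. rewrite <- g2, <- g4. field. lra. }
  assert (hXc : - (a^3*B*c1) <= X * c1 <= a^3*B*c1).
  { split. replace (- (a^3*B*c1)) with ((- (a^3*B))*c1) by ring. apply Rmult_le_compat_r; lra.
    apply Rmult_le_compat_r; lra. }
  assert (hnum : Rabs (g^3 * U + g^2 * cf th g) <= Kc th ga * (1 + a^2)^3).
  { rewrite en. apply Rabs_le.
    assert (E1 : a^3*B*c1 + d = B * a^3 + (B/(3*th)) * a^5 + (1/(3*th)) * a^4 + (2/3) * a^2)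
      by (unfold c1, d; field; lra).
    assert (E2 : Kc th ga * (1 + a^2)^3 = B * (1+a^2)^3 + (B/(3*th)) * (1+a^2)^3 + (1/(3*th)) * (1+a^2)^3 + (2/3) * (1+a^2)^3)
      by (unfold Kc; fold B; ring).
    assert (q1 : B * a^3 <= B * (1+a^2)^3) by (apply Rmult_le_compat_l; lra).
    assert (q2 : (B/(3*th)) * a^5 <= (B/(3*th)) * (1+a^2)^3) by (apply Rmult_le_compat_l; [apply Rdiv_le_0_compat|]; lra).
    assert (q3 : (1/(3*th)) * a^4 <= (1/(3*th)) * (1+a^2)^3) by (apply Rmult_le_compat_l; [apply Rdiv_le_0_compat|]; lra).
    assert (q4 : (2/3) * a^2 <= (2/3) * (1+a^2)^3) by (apply Rmult_le_compat_l; lra).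
    split; lra. }
  unfold rr. fold U. rewrite <- g2 in hnum.
  unfold Rdiv at 1. rewrite Rabs_mult, (Rabs_pos_eq (/ _)).
  2:{ left; apply Rinv_0_lt_compat. apply Rmult_lt_0_compat. apply Rmult_lt_0_compat; lra. lra. }
  assert (hK : 0 <= Kc th ga * (1 + g^2)^3).
  { apply Rmult_le_pos. unfold Kc. fold B. assert (0 <= B/(3*th)) by (apply Rdiv_le_0_compat; lra).
    assert (0 <= 1/(3*th)) by (apply Rdiv_le_0_compat; lra). lra. apply pow_le. assert (0 <= g^2) by apply pow2_ge_0. lra. }
  apply Rle_trans with (Kc th ga * (1 + g^2)^3 * / (th * s * (1 - g / sqrt s))).
  - apply Rmult_le_compat_r; auto. left; apply Rinv_0_lt_compat. apply Rmult_lt_0_compat. apply Rmult_lt_0_compat; lra. lra.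
  - replace (2 * Kc th ga * (1 + g ^ 2) ^ 3 / (th * s)) with (Kc th ga * (1 + g^2)^3 * (2 / (th * s))) by (field; lra).
    apply Rmult_le_compat_l; auto.
    replace (2 / (th * s)) with (/ (th * s * (1/2))) by (field; lra).
    apply Rinv_le_contravar. apply Rmult_lt_0_compat. apply Rmult_lt_0_compat; lra. lra.
    apply Rmult_le_compat_l; [apply Rmult_le_pos|]; lra.
Qed.

Lemma Phi_mono th s ga g : 0 < th -> 0 < s -> ga <= g -> g <= sqrt s / 2 ->
  Phi th s g + g^2/(2*th) <= Phi th s ga + ga^2/(2*th).
Proof.
  intros h hs hg1 hg2. assert (tp : 0 < sqrt s) by (apply sqrt_lt_R0; auto).
  assert (Hm := mvt_le (fun x => - (Phi th s x + x^2/(2*th)))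
     (fun x => x^2 / (th * sqrt s * (1 - x / sqrt s))) ga g hg1).
  cbv beta in Hm. enough (- (Phi th s ga + ga ^ 2 / (2 * th)) <= - (Phi th s g + g ^ 2 / (2 * th))) by lra.
  apply Hm.
  - intros x hx. assert (hx2 : x < sqrt s) by lra.
    assert (hr : 0 < 1 - x / sqrt s).
    { apply Rlt_0_minus. apply (Rmult_lt_reg_r (sqrt s)); auto. field_simplify; lra. }
    assert (H1 := Phi_derive th s x h hs hx2).
    assert (H2 : is_derive (fun x => x^2/(2*th)) x (x/th)) by (auto_derive; auto; fixeq; field; lra).
    assert (H3 := Dmult _ _ _ _ _ (Dconst (-1) x) (Dplus _ _ _ _ _ H1 H2)).
    eapply Dext. 3: exact H3. intros y; cbv beta; fixeq; ring.
    cbv beta. fixeq. field. unfold Rdiv in hr. repeat split; lra.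
  - intros x hx. assert (hx2 : x < sqrt s) by lra.
    assert (hr : 0 < 1 - x / sqrt s).
    { apply Rlt_0_minus. apply (Rmult_lt_reg_r (sqrt s)); auto. field_simplify; lra. }
    apply Rdiv_le_0_compat. apply pow2_ge_0. apply Rmult_lt_0_compat; [apply Rmult_lt_0_compat|]; lra.
Qed.

Lemma exp_mono x y : x <= y -> exp x <= exp y.
Proof. intros [H|H]. left; apply exp_increasing; auto. rewrite H; lra. Qed.

Lemma main_est th ga : 0 < th -> exists D, forall s, 0 < s -> 1 <= sqrt s -> ga <= sqrt s / 2 ->
  Rabs (sqrt s * wf th s ga) <= D / sqrt s.
Proof.
  intros h.
  destruct (gauss_poly (1/(2*th)) 3) as [C3 [hC3 HC3]]. { apply Rdiv_lt_0_compat; lra. }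
  destruct (gauss_poly (1/(8*th)) 2) as [C2 [hC2 HC2]]. { apply Rdiv_lt_0_compat; lra. }
  assert (hB := Bnd_pos th ga h).
  set (B := Bnd th ga) in *. set (K := Kc th ga).
  assert (hK : 0 < K).
  { unfold K, Kc. fold B. assert (0 <= B/(3*th)) by (apply Rdiv_le_0_compat; lra).
    assert (0 <= 1/(3*th)) by (apply Rdiv_le_0_compat; lra). lra. }
  set (M := 1 + B + B/(24*th) + 1/(12*th) + 2/3).
  assert (hM : 0 < M).
  { unfold M. assert (0 <= B/(24*th)) by (apply Rdiv_le_0_compat; lra).
    assert (0 <= 1/(12*th)) by (apply Rdiv_le_0_compat; lra). lra. }
  set (eg := exp (ga^2/(2*th))).
  assert (heg : 0 < eg) by apply exp_pos.
  exists (M*eg*C2 + 2*K*C3*PI*eg/th).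
  intros s hs ht hG.
  assert (tp : 0 < sqrt s) by lra.
  assert (tt : sqrt s * sqrt s = s) by (apply sqrt_sqrt; lra).
  set (t := sqrt s) in *. set (G := t/2).
  set (ex := exp (Phi th s ga + ga^2/(2*th))).
  assert (hex : 0 < ex) by apply exp_pos.
  set (L := 2*K*C3/(th*s) * ex).
  assert (hL : 0 < L).
  { unfold L. apply Rmult_lt_0_compat; auto. apply Rdiv_lt_0_compat. nra. nra. }
  assert (S1 : Rabs (hf th s G - hf th s ga) <= L * atan G - L * atan ga).
  { apply (mvt_cmp (hf th s) (fun x => rr th s x * exp (Phi th s x)) (fun x => L * atan x)
       (fun x => L / (1 + x^2)) ga G hG).
    - intros x hx. apply h_derive; auto. fold t. unfold G in hx. lra.
    - intros x hx. eapply Dext. 3: exact (Dmult _ _ _ _ _ (Dconst L x) (is_derive_atan x)).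
      intros; reflexivity. cbv beta. fixeq. unfold Rsqr. simpl. field.
      assert (0 <= x * x) by nra. lra.
    - intros x [hx1 hx2].
      assert (hq : 0 < 1 + x^2) by (assert (0 <= x^2) by apply pow2_ge_0; lra).
      rewrite Rabs_mult, (Rabs_pos_eq (exp _)) by (left; apply exp_pos).
      assert (A1 := rr_bound th ga s x h hs hx1 hx2). fold K in A1.
      assert (A2 : exp (Phi th s x) <= ex * exp (- (1/(2*th) * x^2))).
      { unfold ex. rewrite <- exp_plus. apply exp_mono.
        assert (Hm := Phi_mono th s ga x h hs hx1 hx2). fold t in Hm.
        replace (1/(2*th)*x^2) with (x^2/(2*th)) by (field; lra). lra. }
      assert (A3 := HC3 x).
      assert (hp3 : 0 <= (1 + x^2)^3) by (apply pow_le; lra).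
      assert (hg3 : 0 < exp (- (1/(2*th) * x^2))) by apply exp_pos.
      apply Rle_trans with (2 * K * (1 + x ^ 2) ^ 3 / (th * s) * (ex * exp (- (1/(2*th) * x^2)))).
      + apply Rmult_le_compat; auto. apply Rabs_pos. left; apply exp_pos.
      + replace (2 * K * (1 + x ^ 2) ^ 3 / (th * s) * (ex * exp (- (1 / (2 * th) * x ^ 2))))
          with (2 * K * ex / (th * s) * ((1 + x ^ 2) ^ 3 * exp (- (1 / (2 * th) * x ^ 2)))) by (field; nra).
        replace (L / (1 + x^2)) with (2 * K * ex / (th * s) * (C3 / (1 + x^2))) by (unfold L; field; nra).
        apply Rmult_le_compat_l; auto.
        apply Rdiv_le_0_compat. nra. nra. }
  assert (S2 : L * atan G - L * atan ga <= L * PI).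
  { destruct (atan_bound G). destruct (atan_bound ga). nra. }
  assert (S3 : Rabs (wf th s ga) * exp (Phi th s ga) <= Rabs (wf th s G) * exp (Phi th s G) + L * PI).
  { assert (Ha : Rabs (hf th s ga) = Rabs (wf th s ga) * exp (Phi th s ga)).
    { unfold hf. rewrite Rabs_mult, (Rabs_pos_eq (exp (Phi th s ga))) by (left; apply exp_pos). reflexivity. }
    assert (Hb : Rabs (hf th s G) = Rabs (wf th s G) * exp (Phi th s G)).
    { unfold hf. rewrite Rabs_mult, (Rabs_pos_eq (exp (Phi th s G))) by (left; apply exp_pos). reflexivity. }
    rewrite <- Ha, <- Hb.
    replace (hf th s ga) with (hf th s G + - (hf th s G - hf th s ga)) by ring.
    eapply Rle_trans. apply Rabs_triang. rewrite Rabs_Ropp. lra. }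
  assert (S4 : exp (Phi th s G) <= exp (Phi th s ga) * (eg * exp (- (1/(8*th) * t^2)))).
  { unfold eg. rewrite <- !exp_plus. apply exp_mono.
    assert (Hm := Phi_mono th s ga G h hs hG (Rle_refl _)). fold t G in Hm.
    unfold G in Hm. replace (1/(8*th)*t^2) with ((t/2)^2/(2*th)) by (field; lra). unfold G. lra. }
  assert (hEga : 0 < exp (Phi th s ga)) by apply exp_pos.
  assert (S5 : Rabs (wf th s ga) <= Rabs (wf th s G) * (eg * exp (- (1/(8*th) * t^2))) + 2*K*C3*PI*eg/(th*s)).
  { apply (Rmult_le_reg_r (exp (Phi th s ga))); auto.
    eapply Rle_trans. exact S3.
    replace ((Rabs (wf th s G) * (eg * exp (- (1 / (8 * th) * t ^ 2))) + 2 * K * C3 * PI * eg / (th * s)) * exp (Phi th s ga))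
      with (Rabs (wf th s G) * (exp (Phi th s ga) * (eg * exp (- (1 / (8 * th) * t ^ 2)))) + L * PI).
    2:{ unfold L, ex. rewrite exp_plus. fold eg. field. nra. }
    apply Rplus_le_compat_r. apply Rmult_le_compat_l. apply Rabs_pos. exact S4. }
  assert (S6 : t * Rabs (wf th s G) <= M * (1 + t^2)^2).
  { unfold wf.
    assert (hu : Rabs (uf th s G) <= 1 / t).
    { unfold uf. fold t. replace (1 - G / t) with (1/2) by (unfold G; field; lra).
      destruct (PP_half th s h hs).
      rewrite Rabs_pos_eq. apply (Rmult_le_reg_r t); auto. field_simplify; lra.
      apply Rdiv_le_0_compat; auto. nra. }
    assert (hGp : 0 <= G) by (unfold G; lra).
    assert (hU := U0_bound th ga G h hG). fold B in hU.
    assert (hc : Rabs (cf th G) <= G^3 * B / (3*th) + G^2/(3*th) + 2/3).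
    { unfold cf. apply Rabs_le_between in hU.
      assert (h3 : 0 <= G^3) by (apply pow_le; auto).
      assert (h2 : 0 <= G^2/(3*th)) by (apply Rdiv_le_0_compat; [apply pow2_ge_0|lra]).
      assert (-(G^3*B) <= G^3 * U0 th G <= G^3 * B) by (split; nra).
      assert (-(G^3*B)/(3*th) <= G^3 * U0 th G/(3*th) <= G^3 * B/(3*th)).
      { split; apply Rmult_le_compat_r; try (left; apply Rinv_0_lt_compat; lra); lra. }
      apply Rabs_le. split. 
      - replace (- (G ^ 3 * B / (3 * th) + G ^ 2 / (3 * th) + 2 / 3)) with (- (G ^ 3 * B) / (3 * th) - G ^ 2 / (3 * th) - 2 / 3) by (field; lra). lra.
      - lra. }
    assert (hV : Rabs (Vf th s G) <= B + (G^3 * B / (3*th) + G^2/(3*th) + 2/3) / t).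
    { unfold Vf. fold t. eapply Rle_trans. apply Rabs_triang. apply Rplus_le_compat. auto.
      unfold Rdiv. rewrite Rabs_mult, (Rabs_pos_eq (/ t)) by (left; apply Rinv_0_lt_compat; auto).
      apply Rmult_le_compat_r. left; apply Rinv_0_lt_compat; auto. auto. }
    assert (hw : Rabs (uf th s G - Vf th s G) <= 1/t + (B + (G^3 * B / (3*th) + G^2/(3*th) + 2/3) / t)).
    { unfold Rminus. eapply Rle_trans. apply Rabs_triang. rewrite Rabs_Ropp. lra. }
    apply Rle_trans with (t * (1/t + (B + (G^3 * B / (3*th) + G^2/(3*th) + 2/3) / t))).
    apply Rmult_le_compat_l; lra.
    replace (t * (1/t + (B + (G^3 * B / (3*th) + G^2/(3*th) + 2/3) / t)))
      with (1 + B * t + (B/(24*th)) * t^3 + (1/(12*th)) * t^2 + 2/3) by (unfold G; field; lra).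
    assert (ht0 : 0 <= t) by lra.
    destruct (poly_facts t ht0) as [p2 [p3 _]].
    assert (y1 : 1 <= 1 + t^2) by nra.
    assert (q0 : 1 <= (1+t^2)^2) by nra.
    assert (q1 : t <= (1+t^2)^2) by nra.
    assert (q2 : t^2 <= (1+t^2)^2) by nra.
    assert (q3 : t^3 <= (1+t^2)^2) by (replace (t^3) with (t*t^2) by ring; replace ((1+t^2)^2) with ((1+t^2)*(1+t^2)) by ring; apply Rmult_le_compat; nra).
    assert (r1 : B * t <= B * (1+t^2)^2) by (apply Rmult_le_compat_l; lra).
    assert (r2 : (B/(24*th)) * t^3 <= (B/(24*th)) * (1+t^2)^2) by (apply Rmult_le_compat_l; [apply Rdiv_le_0_compat|]; lra).
    assert (r3 : (1/(12*th)) * t^2 <= (1/(12*th)) * (1+t^2)^2) by (apply Rmult_le_compat_l; [apply Rdiv_le_0_compat|]; lra).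
    assert (r4 : (2/3) <= (2/3) * (1+t^2)^2) by lra.
    unfold M. lra. }
  assert (hq : 0 < 1 + t^2) by nra.
  assert (A := HC2 t).
  assert (e8 : 0 < exp (- (1/(8*th) * t^2))) by apply exp_pos.
  rewrite Rabs_mult, (Rabs_pos_eq t) by lra.
  apply Rle_trans with (t * Rabs (wf th s G) * (eg * exp (- (1/(8*th) * t^2))) + 2*K*C3*PI*eg/(th*t)).
  { replace (2*K*C3*PI*eg/(th*t)) with (t * (2*K*C3*PI*eg/(th*s))) by (rewrite <- tt; field; lra).
    rewrite Rmult_assoc, <- Rmult_plus_distr_l. apply Rmult_le_compat_l; lra. }
  apply Rle_trans with (M * eg * (C2 / (1 + t^2)) + 2*K*C3*PI*eg/(th*t)).
  { apply Rplus_le_compat_r.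
    apply Rle_trans with (M * (1+t^2)^2 * (eg * exp (- (1/(8*th) * t^2)))).
    apply Rmult_le_compat_r. nra. auto.
    replace (M * (1 + t ^ 2) ^ 2 * (eg * exp (- (1 / (8 * th) * t ^ 2)))) with (M * eg * ((1 + t ^ 2) ^ 2 * exp (- (1 / (8 * th) * t ^ 2)))) by ring.
    apply Rmult_le_compat_l. nra. auto. }
  assert (C2 / (1 + t^2) <= C2 / t).
  { apply Rmult_le_compat_l. lra. apply Rinv_le_contravar; nra. }
  replace ((M * eg * C2 + 2 * K * C3 * PI * eg / th) / t) with (M * eg * (C2 / t) + 2*K*C3*PI*eg/(th*t)) by (field; lra).
  apply Rplus_le_compat_r. apply Rmult_le_compat_l. nra. auto.
Qed.

Lemma expr_eq theta gamma s : 0 < theta -> 0 < s ->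
  F_s theta s (1 - gamma / sqrt s)
       - ( sqrt (2 / theta) * mills_chi (gamma / sqrt (2 * theta)) * sqrt s
           + gamma ^ 3 * sqrt 2 / (3 * (theta * sqrt theta))
               * mills_chi (gamma / sqrt (2 * theta))
           - gamma ^ 2 / (3 * theta)
           - 2 / 3) = sqrt s * wf theta s gamma.
Proof.
  intros h hs. assert (tp : 0 < sqrt s) by (apply sqrt_lt_R0; auto).
  assert (hq : 0 < sqrt theta) by (apply sqrt_lt_R0; auto).
  assert (e : sqrt (2/theta) = sqrt 2 / sqrt theta) by (apply sqrt_div_alt; auto).
  rewrite Fs_eq. unfold wf, uf, Vf, cf, U0. rewrite e.
  field. lra.
Qed.

Theorem proposition5p3 (theta gamma : R) (Htheta : 0 < theta) :
  is_lim
    (fun s : R =>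
       F_s theta s (1 - gamma / sqrt s)
       - ( sqrt (2 / theta) * mills_chi (gamma / sqrt (2 * theta)) * sqrt s
           + gamma ^ 3 * sqrt 2 / (3 * (theta * sqrt theta))
               * mills_chi (gamma / sqrt (2 * theta))
           - gamma ^ 2 / (3 * theta)
           - 2 / 3))
    p_infty 0.
Proof.
  destruct (main_est theta gamma Htheta) as [D HD].
  apply lim_pinf_intro. intros eps heps.
  exists (Rmax 1 (Rmax (Rsqr (2*gamma)) (Rsqr (D/eps)))).
  intros s Hs.
  assert (h1 : 1 < s) by (eapply Rle_lt_trans; [apply Rmax_l|exact Hs]).
  assert (h2 : Rsqr (2*gamma) < s) by (eapply Rle_lt_trans; [eapply Rle_trans; [apply Rmax_l|apply Rmax_r]|exact Hs]).
  assert (h3 : Rsqr (D/eps) < s) by (eapply Rle_lt_trans; [eapply Rle_trans; [apply Rmax_r|apply Rmax_r]|exact Hs]).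
  assert (hs : 0 < s) by lra.
  assert (t1 : 1 <= sqrt s) by (rewrite <- sqrt_1; left; apply sqrt_lt_1_alt; lra).
  assert (t2 : Rabs (2*gamma) < sqrt s).
  { rewrite <- sqrt_Rsqr_abs. apply sqrt_lt_1_alt. split; auto. apply Rle_0_sqr. }
  assert (t3 : Rabs (D/eps) < sqrt s).
  { rewrite <- sqrt_Rsqr_abs. apply sqrt_lt_1_alt. split; auto. apply Rle_0_sqr. }
  assert (hg : gamma <= sqrt s / 2).
  { assert (2*gamma <= Rabs (2*gamma)) by apply Rle_abs. lra. }
  rewrite Rminus_0_r, expr_eq by auto.
  eapply Rle_lt_trans. apply HD; auto.
  assert (D/eps < sqrt s) by (eapply Rle_lt_trans; [apply Rle_abs|exact t3]).
  apply (Rmult_lt_reg_r (sqrt s)). lra.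
  replace (D / sqrt s * sqrt s) with D by (field; lra).
  apply (Rmult_lt_reg_r (/eps)). apply Rinv_0_lt_compat; lra.
  replace (D * /eps) with (D/eps) by reflexivity.
  replace (eps * sqrt s * / eps) with (sqrt s) by (field; lra). exact H.
Qed.
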